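(* Let $R=GR(4,m)$ with $m$ odd, and let $\mathcal{T}$ be its Teichmüller set. Then (1) the multiset $\mathcal{T}+\mathcal{T}+\mathcal{T}=\{X+Y+Z:X,Y,Z\in\mathcal{T}\}$ contains each element of $-\mathcal{T}$ with multiplicity one, and each element of $R$ outside $-\mathcal{T}$ with multiplicity $2^m+1$; (2) the multiset $\mathcal{T}+\mathcal{T}-\mathcal{T}=\{X+Y-Z:X,Y,Z\in\mathcal{T}\}$ contains each element of $\mathcal{T}$ with multiplicity $2^{m+1}-1$, and each element of $R$ outside $\mathcal{T}$ with multiplicity $2^m-1$.
   Context: $R=GR(4,m)=\mathbb{Z}_4[x]/(f(x))$ with $f$ monic of degree $m$ irreducible mod 2 (the Galois ring of order $4^m$). $\mathcal{T}=\{0,1,\beta,\dots,\beta^{2^m-2}\}$ where $\beta\in R^*$ has multiplicative order $2^m-1$ (Teichmüller set), and $-\mathcal{T}=\{-X:X\in\mathcal{T}\}$. Multisets count ordered tuples. *)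

(* Defs.v *)
From HB Require Import structures.
From mathcomp Require Import all_boot all_order all_algebra.
Set Implicit Arguments. Unset Strict Implicit. Unset Printing Implicit Defensive.
Import GRing.Theory.
Local Open Scope ring_scope.

Definition red2 (a : 'Z_4) : 'F_2 := (nat_of_ord a)%:R.

(* The Galois ring GR(4,m) = Z_4[x]/(f) is {poly %/ f}, for f monic of
   degree m irreducible mod 2 (hypotheses stated in the theorem). *)

Definition teich (f : {poly 'Z_4}) (m : nat) (beta : {poly %/ f}) : {set {poly %/ f}} :=
  0 |: [set beta ^+ (nat_of_ord i) | i : 'I_(2 ^ m - 1)].

Definition negset (f : {poly 'Z_4}) (T : {set {poly %/ f}}) : {set {poly %/ f}} :=
  [set - x | x in T].

(* multiplicity of r in the multiset {X + Y + s*Z : X,Y,Z in T} (ordered triples) *)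
Definition mult_sum3 (f : {poly 'Z_4}) (T : {set {poly %/ f}}) (s r : {poly %/ f}) : nat :=
  #|[set t : {poly %/ f} * {poly %/ f} * {poly %/ f} |
      [&& t.1.1 \in T, t.1.2 \in T, t.2 \in T & t.1.1 + t.1.2 + s * t.2 == r]]|.

(* Main.v *)
Require Import Defs.
From HB Require Import structures.
From mathcomp Require Import all_boot all_order all_algebra all_field.
From mathcomp Require Import ring.
Set Warnings "-notation-overridden,-ambiguous-paths".
Set Implicit Arguments. Unset Strict Implicit. Unset Printing Implicit Defensive.
Import GRing.Theory FinRing.Theory.
Local Open Scope ring_scope.

Section FF.
Variable F : finFieldType.
Variable m : nat.
Hypothesis two0 : (2%:R : F) = 0.
Hypothesis cardF : #|F| = (2 ^ m)%N.
Hypothesis mpos : (0 < m)%N.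

Lemma pcF : 2 \in [pchar F].
Proof. by rewrite inE /= two0 eqxx. Qed.

Lemma c2 (x y z : F) : x = y + 2%:R * z -> x = y.
Proof. by rewrite two0 mul0r addr0. Qed.

Definition sq (x : F) := x ^+ (2 ^ m.-1).
Lemma sqK x : sq x ^+ 2 = x.
Proof.
by rewrite /sq -exprM -expnSr prednK // -cardF expf_card.
Qed.

Lemma sqr_inj (x y : F) : x ^+ 2 = y ^+ 2 -> x = y.
Proof.
move=> h; apply/eqP; rewrite -subr_eq0.
have : (x - y) ^+ 2 == 0.
  have -> : (x - y) ^+ 2 = x ^+ 2 - y ^+ 2 + 2%:R * (y ^+ 2 - x * y) by ring.
  by rewrite two0 mul0r addr0 h subrr.
by rewrite expf_eq0.
Qed.

Lemma sqE x : sq (x ^+ 2) = x.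
Proof. by apply: sqr_inj; rewrite sqK. Qed.

Hypothesis modd : odd m.

Lemma pow2mod3 : (2 ^ m %% 3 = 2)%N.
Proof.
have -> : m = (m./2).*2.+1 by rewrite -[LHS](odd_double_half m) modd.
rewrite expnS -mul2n expnM -modnMmr -modnXm.
by rewrite exp1n.
Qed.

Lemma no_root (t : F) : t ^+ 2 + t + 1 != 0.
Proof.
apply/negP => /eqP h.
have t3 : t ^+ 3 = 1.
  apply/eqP; rewrite -subr_eq0.
  have -> : t ^+ 3 - 1 = (t - 1) * (t ^+ 2 + t + 1) by ring.
  by rewrite h mulr0.
have := expf_card t; rewrite cardF (divn_eq (2 ^ m) 3) pow2mod3 exprD mulnC exprM t3 expr1n mul1r.
move=> /eqP; rewrite -subr_eq0.
have -> : t ^+ 2 - t = t ^+ 2 + t + 1 - 1 + 2%:R * - t by ring.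
rewrite two0 mul0r addr0 h sub0r oppr_eq0 oner_eq0 //.
Qed.


Lemma card_Q0 : #|[set p : F * F | p.1 ^+ 2 + p.1 * p.2 + p.2 ^+ 2 == 0]| = 1%N.
Proof.
suff -> : [set p : F * F | p.1 ^+ 2 + p.1 * p.2 + p.2 ^+ 2 == 0] = [set (0, 0)].
  by rewrite cards1.
apply/setP => -[u v].
rewrite !inE /=; apply/idP/idP => [/eqP h|/eqP [-> ->]]; last first.
  by rewrite expr0n mul0r !addr0.
have v0 : v = 0.
  case: (eqVneq v 0) => // nv; exfalso.
  have := no_root (u / v).
  have -> : (u / v) ^+ 2 + u / v + 1 = (u ^+ 2 + u * v + v ^+ 2) / v ^+ 2.
    by field.
  by rewrite h mul0r eqxx.
move: h; rewrite v0 mulr0 expr0n !addr0 => /eqP; rewrite expf_eq0 /= => /eqP ->.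
by [].
Qed.

Definition hQ (c : F) (o : option F) : F * F :=
  match o with
  | None => (sq c, 0)
  | Some t => (t * sq (c / (t ^+ 2 + t + 1)), sq (c / (t ^+ 2 + t + 1)))
  end.

Lemma card_Q c : c != 0 ->
  #|[set p : F * F | p.1 ^+ 2 + p.1 * p.2 + p.2 ^+ 2 == c]| = (2 ^ m).+1.
Proof.
move=> cn0.
have wn0 t : sq (c / (t ^+ 2 + t + 1)) != 0.
  apply/negP => /eqP h; have := sqK (c / (t ^+ 2 + t + 1)).
  rewrite h expr0n /= => /esym/eqP; rewrite mulf_eq0 invr_eq0 (negPf cn0).
  by rewrite (negPf (no_root t)).
have inj : injective (hQ c).
  move=> [x|] [y|] //= [].
  - move=> h1 h2; rewrite -h2 in h1; congr Some.
    by apply: (mulIf (wn0 x)).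
  - by move=> _ h; move: (wn0 x); rewrite h eqxx.
  - by move=> _ h; move: (wn0 y); rewrite -h eqxx.
rewrite -cardF -card_option -cardsT -(card_imset _ inj); apply: eq_card => -[u v].
rewrite !inE; apply/eqP/imsetP => /=.
  move=> h; case: (eqVneq v 0) => [v0|vn0].
    exists None => //; move: h; rewrite v0 mulr0 expr0n !addr0 => <-.
    by rewrite /= sqE.
  exists (Some (u / v)) => //=.
  have e : c / ((u / v) ^+ 2 + u / v + 1) = v ^+ 2.
    rewrite -h; have nr := no_root (u / v).
    have -> : (u / v) ^+ 2 + u / v + 1 = (u ^+ 2 + u * v + v ^+ 2) / v ^+ 2 by field.
    rewrite h; field; rewrite cn0 /=. by rewrite vn0.
  by rewrite e sqE divfK.
case=> [[t|]] _ [-> ->]; last by rewrite sqK mulr0 expr0n !addr0.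
rewrite -mulrA -expr2 exprMn sqK.
have nr := no_root t.
by field.
Qed.

Lemma card_P0 : #|[set p : F * F | p.1 * p.2 == 0]| = (2 ^ m.+1 - 1)%N.
Proof.
have -> : [set p : F * F | p.1 * p.2 == 0] =
   [set (0, v) | v : F] :|: [set (u, 0) | u : F].
  apply/setP => [[u v]]; rewrite !inE mulf_eq0 /=.
  apply/orP/orP => [[/eqP ->|/eqP ->]|[/imsetP[x _ [-> _]]|/imsetP[x _ [_ ->]]]].
  - by left; apply/imsetP; exists v.
  - by right; apply/imsetP; exists u.
  - by left.
  - by right.
rewrite cardsU !card_imset; last by move=> x y [].
  2: by move=> x y [].
have -> : [set (0, v) | v : F] :&: [set (u, 0) | u : F] = [set (0, 0)].
  apply/setP => [[u v]]; rewrite !inE; apply/andP/eqP.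
    by case=> /imsetP[x _ [-> _]] /imsetP[y _ [_ ->]].
  by case=> -> ->; split; apply/imsetP; [exists 0|exists 0].
by rewrite cards1 cardF addnn -mul2n -expnS.
Qed.

Lemma card_P c : c != 0 -> #|[set p : F * F | p.1 * p.2 == c]| = (2 ^ m - 1)%N.
Proof.
move=> cn0.
have -> : [set p : F * F | p.1 * p.2 == c] = [set (u, c / u) | u in [set~ (0:F)]].
  apply/setP => [[u v]]; rewrite !inE /=; apply/eqP/imsetP => [h|].
    have un0 : u != 0 by apply: contraNneq cn0 => u0; rewrite -h u0 mul0r.
    exists u; first by rewrite !inE.
    by rewrite -h [u * v]mulrC mulfK.
  case=> x; rewrite !inE => xn0 [-> ->]; by rewrite mulrC divfK.
rewrite card_imset; last by move=> x y [].
by rewrite cardsC1 cardF subn1.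
Qed.

Lemma shift_count (a : F) (P : F -> F -> F -> bool) (Q : F -> F -> bool) :
 (forall u v, P (u + a) (v + a) (u + v + a) = Q u v) ->
 #|[set p : F * F * F | (p.1.1 + p.1.2 + p.2 == a) && P p.1.1 p.1.2 p.2]|
   = #|[set p : F * F | Q p.1 p.2]|.
Proof.
move=> hPQ.
pose g (p : F * F) := (p.1 + a, p.2 + a, p.1 + p.2 + a).
have ginj : injective g.
  by move=> [x1 x2] [y1 y2] [/addIr -> /addIr ->].
rewrite -(card_imset _ ginj); apply: eq_card => -[[x y] z].
rewrite !inE /=; apply/idP/imsetP.
  case/andP => /eqP h hP.
  have hz : z = x + y + a by apply: (@c2 _ _ (-(x+y))); rewrite -h; ring.
  subst z; exists (x + a, y + a).
    rewrite inE /= -hPQ.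
    have -> : x + a + a = x by apply: (@c2 _ _ a); ring.
    have -> : y + a + a = y by apply: (@c2 _ _ a); ring.
    have -> : x + a + (y + a) + a = x + y + a by apply: (@c2 _ _ a); ring.
    by [].
  rewrite /g /=.
  have -> : x + a + a = x by apply: (@c2 _ _ a); ring.
  have -> : y + a + a = y by apply: (@c2 _ _ a); ring.
  have -> : x + a + (y + a) + a = x + y + a by apply: (@c2 _ _ a); ring.
  by [].
case=> [[u v]]; rewrite inE /= => hQ [-> -> ->]; rewrite hPQ hQ andbT.
apply/eqP; apply: (@c2 _ _ (u + v + a)); ring.
Qed.


Lemma count1 (a k : F) :
  #|[set p : F * F * F | (p.1.1 + p.1.2 + p.2 == a) &&
        (p.1.1 * p.1.2 + (p.1.1 + p.1.2) * p.2 == k ^+ 2)]|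
  = if k == a then 1%N else (2 ^ m).+1.
Proof.
rewrite (@shift_count a (fun x y z => x * y + (x + y) * z == k ^+ 2)
   (fun u v => u ^+ 2 + u * v + v ^+ 2 == (k + a) ^+ 2)); last first.
  move=> u v.
  have -> : (u + a) * (v + a) + (u + a + (v + a)) * (u + v + a) =
     u ^+ 2 + u * v + v ^+ 2 + a ^+ 2.
    by apply: (@c2 _ _ (u * v + 2%:R * (a * u + a * v) + a ^+ 2)); ring.
  have -> : (k + a) ^+ 2 = k ^+ 2 - a ^+ 2.
    by apply: (@c2 _ _ (k * a + a ^+ 2)); ring.
  by apply/eqP/eqP => h; [rewrite -h addrK | rewrite h subrK].
case: (eqVneq k a) => [->|kna].
  have -> : (a + a) ^+ 2 = 0 by rewrite addrr_pchar2 ?pcF // expr0n.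
  exact: card_Q0.
apply: card_Q; rewrite expf_eq0 /= addr_eq0 oppr_pchar2 ?pcF //.
Qed.

Lemma count2 (a k : F) :
  #|[set p : F * F * F | (p.1.1 + p.1.2 + p.2 == a) &&
        (p.1.1 * p.1.2 + (p.1.1 + p.1.2) * p.2 + p.2 ^+ 2 == k ^+ 2)]|
  = if k == 0 then (2 ^ m.+1 - 1)%N else (2 ^ m - 1)%N.
Proof.
rewrite (@shift_count a (fun x y z => x * y + (x + y) * z + z ^+ 2 == k ^+ 2)
   (fun u v => u * v == k ^+ 2)); last first.
  move=> u v.
  have -> : (u + a) * (v + a) + (u + a + (v + a)) * (u + v + a) + (u + v + a) ^+ 2 =
     u * v.
    by apply: (@c2 _ _ (a * u + a * v + a ^+ 2 + (u + v + a) * (u + v + a))); ring.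
  by [].
case: (eqVneq k 0) => [->|kn0].
  rewrite expr0n; exact: card_P0.
by apply: card_P; rewrite expf_eq0.
Qed.

End FF.

Lemma red2_zmod : zmod_morphism red2.
Proof. by do 2!case=> [[|[|[|[|?]]]] ?] //; apply/val_inj. Qed.
Lemma red2_mon : monoid_morphism red2.
Proof. split; first by apply/val_inj.
by do 2!case=> [[|[|[|[|?]]]] ?] //; apply/val_inj. Qed.
HB.instance Definition _ := GRing.isZmodMorphism.Build _ _ red2 red2_zmod.
HB.instance Definition _ := GRing.isMonoidMorphism.Build _ _ red2 red2_mon.

Definition hf (c : 'Z_4) : 'Z_4 := (nat_of_ord c %/ 2)%:R.
Lemma hf0 : hf 0 = 0. Proof. by apply/val_inj. Qed.
Lemma red2_ker (c : 'Z_4) : red2 c = 0 -> c = hf c *+ 2.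
Proof. by case: c => [[|[|[|[|?]]]] ?] // _; apply/val_inj. Qed.
Lemma dbl_ker (c : 'Z_4) : c *+ 2 = 0 -> red2 c = 0.
Proof. by case: c => [[|[|[|[|?]]]] ?] // /eqP //= _; apply/val_inj. Qed.
Lemma four0Z : (4%:R : 'Z_4) = 0. Proof. by apply/val_inj. Qed.

Lemma size_map_le (A B : nzRingType) (g : A -> B) (p : {poly A}) :
  (size (map_poly g p) <= size p)%N.
Proof. exact: size_poly. Qed.

Section GR.
Variables (m : nat) (f : {poly 'Z_4}) (beta : {poly %/ f}).
Hypothesis modd : odd m.
Hypothesis fmon : f \is monic.
Hypothesis fsz : size f = m.+1.
Hypothesis firr : irreducible_poly (map_poly red2 f).

Local Notation R := {poly %/ f}.
Local Notation fb := (map_poly red2 f).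

Lemma mpos : (0 < m)%N.
Proof. by case: m modd. Qed.

Lemma mkf : mk_monic f = f.
Proof. by rewrite /mk_monic fsz fmon ltnS mpos. Qed.

Lemma fbmon : fb \is monic.
Proof.
move/monicP: fmon => lc; apply/monicP.
have r1 : red2 1 = 1 by apply/val_inj.
rewrite lead_coef_map_eq lc; first exact: r1. by change (red2 1 != 0); rewrite r1 oner_eq0.
Qed.

Lemma fbsz : size fb = m.+1.
Proof.
have r1 : red2 1 = 1 by apply/val_inj.
by rewrite size_map_poly_id0 // (monicP fmon) r1 oner_eq0. Qed.

Lemma mkfb : mk_monic fb = fb.
Proof. by rewrite /mk_monic fbsz fbmon ltnS mpos. Qed.

Definition mi : monic_irreducible_poly fb := (firr, fbmon).
Definition F := {poly %/ fb with mi}.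

Lemma cardF : #|F| = (2 ^ m)%N.
Proof. by rewrite card_qfpoly card_Fp // fbsz. Qed.

Lemma two0F : (2%:R : F) = 0.
Proof. apply: val_inj => /=. rewrite -polyCD (_ : 1 + 1 = 0 :> 'F_2) ?polyC0 //; exact: val_inj. Qed.


Definition pi (r : R) : F := in_qpoly fb (map_poly red2 (r : {poly 'Z_4})).

Lemma in_qpoly_fb (q : {poly 'F_2}) : in_qpoly fb (q * fb) = 0.
Proof. by apply: val_inj => /=; rewrite mkfb Pdiv.RingMonic.rmodp_mull // fbmon. Qed.

Lemma in_qpoly_sub (A B : {poly 'F_2}) : in_qpoly fb (A - B * fb) = in_qpoly fb A.
Proof.
apply: val_inj => /=; rewrite mkfb Pdiv.RingMonic.rmodpD ?fbmon //.
by rewrite -mulNr Pdiv.RingMonic.rmodp_mull ?fbmon // addr0.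
Qed.

Lemma piD x y : pi (x + y) = pi x + pi y.
Proof. by rewrite /pi poly_of_qpolyD rmorphD /= in_qpolyD. Qed.

Lemma piB x y : pi (x - y) = pi x - pi y.
Proof. by rewrite /pi /= rmorphB /= raddfB. Qed.

Lemma pi1 : pi 1 = 1.
Proof. by rewrite /pi /= rmorph1 in_qpoly1. Qed.

Lemma piM x y : pi (x * y) = pi x * pi y.
Proof.
rewrite /pi poly_of_qpolyM.
set P := (x : {poly 'Z_4}) * y.
have e := Pdiv.RingMonic.rdivp_eq (monic_mk_monic f) P.
have -> : Pdiv.CommonRing.rmodp P (mk_monic f) =
    P - Pdiv.CommonRing.rdivp P (mk_monic f) * mk_monic f.
  by rewrite {2}e addrC addKr.
have mf : map_poly red2 (mk_monic f) = fb by rewrite mkf.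
by rewrite rmorphB !rmorphM /= mf in_qpoly_sub rmorphM.
Qed.


Lemma pi_zmod : zmod_morphism pi. Proof. exact: piB. Qed.
Lemma pi_mon : monoid_morphism pi. Proof. by split; [exact: pi1|exact: piM]. Qed.
HB.instance Definition _ := GRing.isZmodMorphism.Build _ _ pi pi_zmod.
HB.instance Definition _ := GRing.isMonoidMorphism.Build _ _ pi pi_mon.

Lemma piE (r : R) : (pi r : {poly 'F_2}) = map_poly red2 (r : {poly 'Z_4}).
Proof.
apply: in_qpoly_small; rewrite mkfb fbsz -fsz.
apply: leq_ltn_trans (size_map_le _ _) _.
by apply: (leq_trans (size_mk_monic r)); rewrite mkf.
Qed.

Lemma qinj (x y : R) : (x : {poly 'Z_4}) = (y : {poly 'Z_4}) -> x = y.
Proof. exact: val_inj. Qed.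

Lemma dbl_poly (s : R) : ((s *+ 2 : R) : {poly 'Z_4}) = (s : {poly 'Z_4}) *+ 2.
Proof. by rewrite !mulr2n poly_of_qpolyD. Qed.

Lemma pi_eq0 (r : R) : pi r = 0 -> exists s : R, r = s *+ 2.
Proof.
move=> h.
have hc i : red2 ((r : {poly 'Z_4})`_i) = 0.
  have e : map_poly red2 (r : {poly 'Z_4}) = 0 by rewrite -piE h.
  have := congr1 (fun p : {poly 'F_2} => p`_i) e.
  by rewrite coef_map_id0 ?coef0 // raddf0.
have sz : (size (map_poly hf (r : {poly 'Z_4})) < size (mk_monic f))%N.
  apply: leq_ltn_trans (size_map_le _ _) _; exact: size_mk_monic.
exists (in_qpoly f (map_poly hf (r : {poly 'Z_4}))).
apply: qinj; rewrite dbl_poly in_qpoly_small //.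
apply/polyP => i; rewrite coefMn coef_map_id0 ?hf0 //.
exact: red2_ker.
Qed.

Lemma pi_dbl (r : R) : r *+ 2 = 0 -> pi r = 0.
Proof.
move=> h0.
have h : (r : {poly 'Z_4}) *+ 2 = 0 by rewrite -dbl_poly h0.
have e : (pi r : {poly 'F_2}) = 0.
  rewrite piE; apply/polyP => i.
  rewrite coef_map_id0 ?coef0; last by apply/val_inj.
  apply: dbl_ker; have := congr1 (fun p : {poly 'Z_4} => p`_i) h.
  by rewrite /= coefMn coef0.
exact: val_inj.
Qed.

Lemma four0 (x : R) : x *+ 4 = 0.
Proof.
have : (4%:R : R) = 0.
  by apply: qinj; rewrite qpolyC_natr -polyC_natr four0Z.
by move=> h4; rewrite -mulr_natr h4 mulr0.
Qed.


Lemma dblF (x : F) : x *+ 2 = 0.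
Proof. by rewrite -mulr_natr two0F mulr0. Qed.

Lemma sq_dbl (a s : R) : (a + s *+ 2) ^+ 2 = a ^+ 2.
Proof.
have -> : (a + s *+ 2) ^+ 2 = a ^+ 2 + (a * s + s ^+ 2) *+ 4 by ring.
by rewrite four0 addr0.
Qed.

Lemma dbl_of_pi0 (x : R) : pi x = 0 -> x *+ 2 = 0.
Proof. by case/pi_eq0 => s ->; rewrite -mulrnA four0. Qed.

Hypothesis bn : beta ^+ (2 ^ m - 1) = 1.
Hypothesis bord : forall k : nat, (0 < k < 2 ^ m - 1)%N -> beta ^+ k != 1.

Local Notation n := (2 ^ m - 1)%N.
Local Notation T := (teich m beta).

Lemma nS : n.+1 = (2 ^ m)%N.
Proof. by rewrite subn1 prednK // expn_gt0. Qed.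

Lemma npos : (0 < n)%N.
Proof.
rewrite subn_gt0 -[1%N](expn0 2) ltn_exp2l //; exact: mpos.
Qed.

Lemma bexp k : beta ^+ k = beta ^+ (k %% n).
Proof.
by rewrite {1}(divn_eq k n) exprD mulnC exprM bn expr1n mul1r.
Qed.

Lemma TP x : reflect (x = 0 \/ exists k, x = beta ^+ k) (x \in T).
Proof.
rewrite /teich in_setU1; apply: (iffP orP).
  case=> [/eqP ->|/imsetP [i _ ->]]; [by left | by right; exists i].
case=> [->|[k ->]]; [by left | right].
apply/imsetP; exists (Ordinal (ltn_pmod k npos)) => //.
exact: bexp.
Qed.

Lemma T0 : (0 : R) \in T. Proof. by apply/TP; left. Qed.
Lemma Tb k : beta ^+ k \in T. Proof. by apply/TP; right; exists k. Qed.

Lemma TM x y : x \in T -> y \in T -> x * y \in T.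
Proof.
move=> /TP [->|[i ->]]; first by rewrite mul0r T0.
move=> /TP [->|[j ->]]; first by rewrite mulr0 T0.
by rewrite -exprD Tb.
Qed.

Lemma TX x k : x \in T -> x ^+ k \in T.
Proof.
move=> xT; elim: k => [|k IH]; first by rewrite expr0 -(expr0 beta) Tb.
by rewrite exprS TM.
Qed.

Lemma Tfrob x : x \in T -> x ^+ (2 ^ m) = x.
Proof.
move=> /TP [->|[k ->]]; first by rewrite expr0n expn_eq0.
by rewrite -exprM -nS mulnS exprD mulnC exprM bn expr1n mulr1.
Qed.

Lemma pib_neq0 k : pi (beta ^+ k) != 0.
Proof.
have h : beta ^+ k * beta ^+ (k * n - k) = 1.
  rewrite -exprD subnKC; first by rewrite mulnC exprM bn expr1n.
  by rewrite leq_pmulr // npos.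
apply/negP => /eqP h0; have := congr1 pi h.
by rewrite rmorphM /= h0 mul0r rmorph1 => /eqP; rewrite eq_sym oner_eq0.
Qed.

Lemma pib1 k : pi (beta ^+ k) = 1 -> beta ^+ k = 1.
Proof.
move=> h.
have : pi (beta ^+ k - 1) = 0 by rewrite rmorphB /= h rmorph1 subrr.
case/pi_eq0 => s hs.
have e : beta ^+ (2 * k) = 1.
  by rewrite mulnC exprM (_ : beta ^+ k = 1 + s *+ 2) ?sq_dbl ?expr1n // -hs addrC subrK.
have -> : beta ^+ k = beta ^+ k * (beta ^+ n) ^+ k by rewrite bn expr1n mulr1.
rewrite -exprM -exprD -mulSn nS -[m](prednK mpos) expnS -mulnA mulnCA [X in beta ^+ X]mulnC exprM.
by rewrite e expr1n.
Qed.

Lemma piexp_inj i j : (i < n)%N -> (j < n)%N -> pi (beta ^+ i) = pi (beta ^+ j) -> i = j.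
Proof.
wlog le : i j / (i <= j)%N.
  move=> H hi hj e; case: (leqP i j) => [l|l]; first exact: H.
  by apply/esym/H => //; apply: ltnW.
move=> hi hj e.
have e1 : pi (beta ^+ (j - i)) = 1.
  apply: (mulfI (pib_neq0 i)); rewrite mulr1 -rmorphM /= -exprD subnKC //; rewrite e.

have := pib1 e1; case: (posnP (j - i)) => [d0|dp].
  by move=> _; apply/eqP; rewrite eqn_leq le /= -subn_eq0 d0.
move=> b1; have hk : (0 < j - i < n)%N by rewrite dp /= (leq_ltn_trans (leq_subr i j) hj).
by move: (bord hk); rewrite b1 eqxx.
Qed.

Lemma piinjT x y : x \in T -> y \in T -> pi x = pi y -> x = y.
Proof.
move=> /TP hx /TP hy.
have red k : exists2 k', (k' < n)%N & beta ^+ k = beta ^+ k'.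
  by exists (k %% n)%N; [exact: ltn_pmod npos | exact: bexp].
case: hx => [->|[i ->]]; case: hy => [->|[j ->]] //.
- by move=> /esym /eqP; rewrite rmorph0 (negPf (pib_neq0 j)).
- by move=> /eqP; rewrite rmorph0 (negPf (pib_neq0 i)).
case: (red i) => i' hi ->; case: (red j) => j' hj -> e.
by rewrite (piexp_inj hi hj e).
Qed.

Lemma cardT : #|T| = (2 ^ m)%N.
Proof.
rewrite /teich cardsU1 card_imset; last first.
  move=> a b /(congr1 pi) e; apply: val_inj; exact: piexp_inj (ltn_ord a) (ltn_ord b) e.
have -> : (0 : R) \notin [set beta ^+ (nat_of_ord i) | i : 'I_n].
  apply/imsetP => [[i _ /(congr1 pi)]].
  by move=> /esym /eqP; rewrite rmorph0 (negPf (pib_neq0 i)).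
by rewrite card_ord add1n nS.
Qed.

Lemma piT_surj (y : F) : exists2 x, x \in T & pi x = y.
Proof.
have : pi @: T == [set: F].
  rewrite eqEcard subsetT cardsT (cardF) card_in_imset ?cardT ?leqnn //.
  by move=> a b ha hb; apply: piinjT.
move=> /eqP e; have : y \in pi @: T by rewrite e inE.
by case/imsetP => x xT ->; exists x.
Qed.


Lemma Tsqrt X : X \in T -> exists2 A, A \in T & A ^+ 2 = X.
Proof.
move=> XT; exists (X ^+ (2 ^ m.-1)); first exact: TX.
by rewrite -exprM -expnSr prednK ?mpos // Tfrob.
Qed.

Lemma addsq a b : a \in T -> b \in T ->
  exists2 d, d \in T & a ^+ 2 + b ^+ 2 = d + (a * b) *+ 2.
Proof.
move=> aT bT; have [c cT pc] := piT_surj (pi a + pi b).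
have : pi (a + b - c) = 0 by rewrite rmorphB rmorphD /= pc subrr.
case/pi_eq0 => s hs.
have e : a + b = c + s *+ 2 by rewrite -hs [c + _]addrC subrK.
exists (c ^+ 2); first exact: TX.
have -> : a ^+ 2 + b ^+ 2 = (a + b) ^+ 2 + (a * b) *+ 2 - (a * b) *+ 4 by ring.
by rewrite four0 subr0 e sq_dbl.
Qed.

Lemma triple X Y Z : X \in T -> Y \in T -> Z \in T ->
  exists E, exists w, [/\ E \in T, X + Y + Z = E + w *+ 2 &
     pi w ^+ 2 = pi X * pi Y + (pi X + pi Y) * pi Z].
Proof.
move=> XT YT ZT.
have [A AT hA] := Tsqrt XT; have [B BT hB] := Tsqrt YT; have [C CT hC] := Tsqrt ZT.
have [D DT hD] := addsq AT BT.
have [D' D'T hD'] := Tsqrt DT.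
have [E ET hE] := addsq D'T CT.
exists E, (D' * C + A * B); split => //.
  have -> : X + Y + Z = (A ^+ 2 + B ^+ 2) + C ^+ 2 by rewrite hA hB hC.
  rewrite hD -hD'.
  have -> : D' ^+ 2 + (A * B) *+ 2 + C ^+ 2 = (D' ^+ 2 + C ^+ 2) + (A * B) *+ 2 by ring.
  by rewrite hE; ring.
have piD : pi D = pi X + pi Y.
  have := congr1 pi hD; rewrite hA hB !raddfD /= -mulr2n dblF addr0.
  by move=> ->.
rewrite rmorphD !rmorphM /= sqrrD dblF addr0 !exprMn -!rmorphXn /= hA hB hC hD' piD.
by rewrite addrC.
Qed.

Lemma decomp r : exists t, exists s, t \in T /\ r = t + s *+ 2.
Proof.
have [t tT pt] := piT_surj (pi r).
have : pi (r - t) = 0 by rewrite rmorphB /= pt subrr.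
case/pi_eq0 => s hs; exists t, s; split => //.
by rewrite -hs [t + _]addrC subrK.
Qed.

Lemma uniq_dec t t' s s' : t \in T -> t' \in T ->
  t + s *+ 2 = t' + s' *+ 2 -> t = t' /\ pi s = pi s'.
Proof.
move=> tT t'T e.
have ett : t = t'.
  apply: piinjT => //; have := congr1 pi e.
  by rewrite !rmorphD /= -!mulr2n !dblF !addr0.
split => //; subst t'.
have e2 : s *+ 2 = s' *+ 2 by apply: (addrI t).
have : (s - s') *+ 2 = 0 by rewrite mulrnBl e2 subrr.
by move/pi_dbl; rewrite rmorphB /= => /eqP; rewrite subr_eq0 => /eqP.
Qed.

Lemma dbl_eq (w s : R) : pi w = pi s -> w *+ 2 = s *+ 2.
Proof.
move=> e; apply/eqP; rewrite -subr_eq0 -mulrnBl; apply/eqP.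
by apply: dbl_of_pi0; rewrite rmorphB /= e subrr.
Qed.

Lemma count_gen (c : R) (G : F -> F -> F -> F) :
  pi c = 1 ->
  (forall X Y Z, X \in T -> Y \in T -> Z \in T -> exists E, exists w,
      [/\ E \in T, X + Y + c * Z = E + w *+ 2 & pi w ^+ 2 = G (pi X) (pi Y) (pi Z)]) ->
  forall r t s, t \in T -> r = t + s *+ 2 ->
  mult_sum3 T c r =
  #|[set p : F * F * F | (p.1.1 + p.1.2 + p.2 == pi t) &&
                         (G p.1.1 p.1.2 p.2 == pi s ^+ 2)]|.
Proof.
move=> pc HG r t s tT hr.
rewrite /mult_sum3.
pose phi (p : R * R * R) := (pi p.1.1, pi p.1.2, pi p.2).
set S := [set _ | _].
have inj : {in S &, injective phi}.
  move=> [[X1 Y1] Z1] [[X2 Y2] Z2]; rewrite inE => h; rewrite inE.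
  case/and4P: h => h1 h2 h3 _; case/and4P => h4 h5 h6 _ e.
  have e1 : pi X1 = pi X2 := congr1 (fun q : F * F * F => q.1.1) e.
  have e2 : pi Y1 = pi Y2 := congr1 (fun q : F * F * F => q.1.2) e.
  have e3 : pi Z1 = pi Z2 := congr1 (fun q : F * F * F => q.2) e.
  by rewrite (piinjT h1 h4 e1 : X1 = X2) (piinjT h2 h5 e2 : Y1 = Y2) (piinjT h3 h6 e3 : Z1 = Z2).
rewrite -(card_in_imset inj); apply: eq_card => -[[x y] z].
have piE3 X Y Z E w : X + Y + c * Z = E + w *+ 2 -> pi E = pi X + pi Y + pi Z.
  move=> /(congr1 pi); rewrite !rmorphD rmorphM /= -mulr2n pc mul1r dblF addr0.
  by move=> ->.
apply/imsetP/idP.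
  case=> -[[X Y] Z] hin e; move: hin; rewrite /S inE => /and4P [XT YT ZT /eqP hs].
  have -> : x = pi X := congr1 (fun q : F * F * F => q.1.1) e.
  have -> : y = pi Y := congr1 (fun q : F * F * F => q.1.2) e.
  have -> : z = pi Z := congr1 (fun q : F * F * F => q.2) e.
  have [E [w [ET hE hw]]] := HG X Y Z XT YT ZT.
  rewrite inE /= -(piE3 _ _ _ _ _ hE) -hw.
  move: hE; rewrite hs hr => /esym /(uniq_dec ET tT) [-> ->].
  by rewrite !eqxx.
rewrite inE /= => /andP [/eqP hxyz /eqP hG].
have [X XT eX] := piT_surj x; have [Y YT eY] := piT_surj y; have [Z ZT eZ] := piT_surj z.
subst x y z.
exists (X, Y, Z); last by [].
have [E [w [ET hE hw]]] := HG X Y Z XT YT ZT.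
rewrite /S inE /= XT YT ZT /= hE hr.
have eE : E = t by apply: piinjT => //; rewrite (piE3 _ _ _ _ _ hE).
rewrite eE (dbl_eq (w := w) (s := s)) //.
by apply: sqr_inj; [exact: two0F | rewrite hw hG].
Qed.


Lemma neg_dec r t s : t \in T -> r = t + s *+ 2 -> (r \in negset T) = (pi s == pi t).
Proof.
move=> tT hr; apply/imsetP/eqP.
  case=> t' t'T hr'.
  have e : t' + t' *+ 2 = t + s *+ 2.
    rewrite -hr hr'; apply/eqP; rewrite -subr_eq0.
    have -> : t' + t' *+ 2 - - t' = t' *+ 4 by ring.
    by rewrite four0.
  by have [-> ->] := uniq_dec t'T tT e.
move=> e; exists t => //; rewrite hr (dbl_eq e).
apply/eqP; rewrite -subr_eq0.
have -> : t + t *+ 2 - - t = t *+ 4 by ring.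
by rewrite four0.
Qed.

Lemma T_dec r t s : t \in T -> r = t + s *+ 2 -> (r \in T) = (pi s == 0).
Proof.
move=> tT hr; apply/idP/eqP.
  move=> rT; have e : r + 0 *+ 2 = t + s *+ 2 by rewrite mul0rn addr0.
  by have [_ <-] := uniq_dec rT tT e; rewrite rmorph0.
move=> e; rewrite hr (dbl_eq (w := s) (s := 0)) ?rmorph0 //.
by rewrite mul0rn addr0.
Qed.

Lemma pim1 : pi (-1) = 1.
Proof. by rewrite rmorphN rmorph1 oppr_pchar2 // inE /= two0F eqxx. Qed.

Lemma main_sec :
  ((forall r, r \in negset T -> mult_sum3 T 1 r = 1%N) /\
   (forall r, r \notin negset T -> mult_sum3 T 1 r = (2 ^ m + 1)%N)) /\
  ((forall r, r \in T -> mult_sum3 T (-1) r = (2 ^ m.+1 - 1)%N) /\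
   (forall r, r \notin T -> mult_sum3 T (-1) r = (2 ^ m - 1)%N)).
Proof.
have C1 r : mult_sum3 T 1 r = if r \in negset T then 1%N else (2 ^ m).+1.
  have [t [s [tT hr]]] := decomp r.
  rewrite (@count_gen 1 (fun x y z => x * y + (x + y) * z) (rmorph1 _) _ r t s tT hr).
    by rewrite (count1 two0F cardF mpos modd) (neg_dec tT hr).
  move=> X Y Z XT YT ZT; have [E [w [ET hE hw]]] := triple XT YT ZT.
  by exists E, w; rewrite mul1r.
have C2 r : mult_sum3 T (-1) r = if r \in T then (2 ^ m.+1 - 1)%N else (2 ^ m - 1)%N.
  have [t [s [tT hr]]] := decomp r.
  rewrite (@count_gen (-1) (fun x y z => x * y + (x + y) * z + z ^+ 2) pim1 _ r t s tT hr).
    by rewrite (count2 two0F cardF) (T_dec tT hr).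
  move=> X Y Z XT YT ZT; have [E [w [ET hE hw]]] := triple XT YT ZT.
  exists E, (w + Z); split => //.
    have -> : X + Y + -1 * Z = X + Y + Z + Z *+ 2 - Z *+ 4 by ring.
    by rewrite four0 subr0 hE; ring.
  by rewrite rmorphD sqrrD dblF addr0 hw.
split; split => r hr; rewrite ?C1 ?C2 ?hr //; rewrite (negPf hr) //.
by rewrite addn1.
Qed.

End GR.

Theorem lemmaB3 (m : nat) (f : {poly 'Z_4}) (beta : {poly %/ f}) :
  odd m ->
  f \is monic -> size f = m.+1 ->
  irreducible_poly (map_poly red2 f) ->
  beta ^+ (2 ^ m - 1) = 1 ->
  (forall k : nat, (0 < k < 2 ^ m - 1)%N -> beta ^+ k != 1) ->
  let T := teich m beta in
  ((forall r, r \in negset T -> mult_sum3 T 1 r = 1%N) /\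
   (forall r, r \notin negset T -> mult_sum3 T 1 r = (2 ^ m + 1)%N)) /\
  ((forall r, r \in T -> mult_sum3 T (-1) r = (2 ^ m.+1 - 1)%N) /\
   (forall r, r \notin T -> mult_sum3 T (-1) r = (2 ^ m - 1)%N)).
Proof.
move=> modd fmon fsz firr bn bord T.
exact: (main_sec modd fmon fsz firr bn bord).
Qed.
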